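(* Let $c\in\mathbb{N}$, $I=\mathbb{N}\times[c]$, $I_n=[n]\times[c]$. Then every $\mathrm{Sym}$-invariant chain of lattices $(L_n)_{n\ge1}$ Graver-stabilizes. In particular, such a chain universal Gröbner-stabilizes, Gröbner-stabilizes with respect to an arbitrary term order on $\mathbb{Z}_{\ge0}^{(I)}$, Markov-stabilizes, and stabilizes.
   Context: $\mathbb{N}=\{1,2,\dots\}$. $\mathbb{Z}^{(J)}$: free abelian group with basis $J$; $\mathbb{Z}_{\ge0}^{(J)}$ its nonnegative vectors; $\mathbb{Z}^{(I_n)}\subseteq\mathbb{Z}^{(I)}$ via extension by zero; lattice = subgroup. $\mathrm{Sym}(n)$ is the symmetric group on $[n]$, embedded in $\mathrm{Sym}(n+1)$ as stabilizer of $n+1$, $\mathrm{Sym}=\bigcup_n\mathrm{Sym}(n)$, acting on $\mathbb{Z}^{(I)}$ by $\sigma(\mathbf{e}_{i,j})=\mathbf{e}_{\sigma(i),j}$ (so $\mathrm{Sym}(n)$ acts on $\mathbb{Z}^{(I_n)}$). A $\mathrm{Sym}$-invariant chain of lattices: $L_n\subseteq\mathbb{Z}^{(I_n)}$ lattices, $L_m\subseteq L_n$ for $m\le n$, each $\mathrm{Sym}(n)$-invariant. Basis notions for a lattice $L$: generating set; Markov basis ($\mathcal{B}$ such that for every $\mathbf{u}\ge\mathbf{0}$ the graph on the fiber $F_L(\mathbf{u})=\{\mathbf{v}\ge\mathbf{0}\mid\mathbf{u}-\mathbf{v}\in L\}$ with edges $\mathbf{v}-\mathbf{w}\in\pm\mathcal{B}$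 is connected); Gröbner basis w.r.t. a term order $\prec$ (additive well-order) (for every $\mathbf{u}$ a directed path from $\mathbf{u}$ to the $\prec$-minimum of $F_L(\mathbf{u})$ along steps $\mathbf{v}\to\mathbf{w}$, $\mathbf{v}-\mathbf{w}\in\pm\mathcal{B}$, $\mathbf{w}\prec\mathbf{v}$); universal Gröbner basis (Gröbner for every term order); Graver basis (the $\sqsubseteq$-minimal elements of $L\setminus\{\mathbf{0}\}$, where $\mathbf{u}\sqsubseteq\mathbf{v}$ iff $u_iv_i\ge0$, $|u_i|\le|v_i|$ for all $i$). An equivariant X of a $\mathrm{Sym}(n)$-invariant $L_n$ is $\mathcal{B}\subseteq L_n$ with $\mathrm{Sym}(n)(\mathcal{B})$ an X of $L_n$ (local Gröbner bases taken w.r.t. the restriction of the term order to $\mathbb{Z}_{\ge0}^{(I_n)}$). The chain X-stabilizes if there exist $p$ and an equivariant X $\mathcal{B}_p$ of $L_p$ that is an equivariant X of $L_n$ for all $n\ge p$. The chain stabilizes if there is $p$ with $L_n=\mathbb{Z}\,\mathrm{Sym}(n)(L_m)$ (subgroup generated) for all $n\ge m\ge p$. *)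

(* Defs.v *)
From mathcomp Require Import all_boot all_order all_algebra all_fingroup.
Set Implicit Arguments. Unset Strict Implicit. Unset Printing Implicit Defensive.
Import Order.TTheory GRing.Theory Num.Theory.
Local Open Scope ring_scope.

(* Vectors of Z^(I), I = N x [c]; row index i : nat stands for the element
   i+1 of N, column index j : 'I_c stands for j+1 of [c]. *)
Definition vec (c : nat) := nat -> 'I_c -> int.

Section Defs.
Variable c : nat.
Implicit Types (u v w : vec c) (L B G : vec c -> Prop).

Definition vzero : vec c := fun _ _ => 0.
Definition vadd u v : vec c := fun i j => u i j + v i j.
Definition vopp u : vec c := fun i j => - u i j.
Definition vsub u v : vec c := fun i j => u i j - v i j.

Definition supported_in (n : nat) u := forall i j, (n <= i)%N -> u i j = 0.
Definition finsupp u := exists n, supported_in n u.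
Definition nonneg u := forall i j, 0 <= u i j.

Definition is_lattice (n : nat) L :=
  [/\ L vzero, (forall u v, L u -> L v -> L (vsub u v)) &
      (forall u, L u -> supported_in n u)].

(* the permutation s of [n], extended to N by fixing everything >= n *)
Definition pext (n : nat) (s : {perm 'I_n}) (i : nat) : nat :=
  (fun o : option 'I_n => if o is Some k then nat_of_ord (s k) else i) (insub i).

(* action: s(e_{i,j}) = e_{s(i),j}, i.e. (s u)(i,j) = u(s^-1 i, j) *)
Definition sact (n : nat) (s : {perm 'I_n}) u : vec c :=
  fun i j => u (pext s^-1 i) j.

Definition sym_invariant (n : nat) L := forall (s : {perm 'I_n}) u, L u -> L (sact s u).

Definition sym_chain (L : nat -> vec c -> Prop) :=
  (forall n, (0 < n)%N -> is_lattice n (L n) /\ sym_invariant n (L n)) /\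
  (forall m n, (0 < m)%N -> (m <= n)%N -> forall u, L m u -> L n u).

Definition sym_orbit (n : nat) B : vec c -> Prop :=
  fun v => exists (s : {perm 'I_n}) u, B u /\ v = sact s u.

Inductive zspan (S : vec c -> Prop) : vec c -> Prop :=
| zspan0 : zspan S vzero
| zspan_gen u : S u -> zspan S u
| zspan_sub u v : zspan S u -> zspan S v -> zspan S (vsub u v).

Definition fiber L u : vec c -> Prop := fun v => nonneg v /\ L (vsub u v).

Definition pmB B d := B d \/ B (vopp d).

Inductive mconn (F B : vec c -> Prop) : vec c -> vec c -> Prop :=
| mconn_refl v : mconn F B v v
| mconn_step u v w : mconn F B u v -> F w -> pmB B (vsub v w) -> mconn F B u w.

Inductive dreach (F B : vec c -> Prop) (prec : vec c -> vec c -> Prop)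
  : vec c -> vec c -> Prop :=
| dreach_refl v : dreach F B prec v v
| dreach_step u v w : dreach F B prec u v -> F w -> pmB B (vsub v w) ->
    prec w v -> dreach F B prec u w.

Definition tdom u := nonneg u /\ finsupp u.

Definition is_term_order (prec : vec c -> vec c -> Prop) :=
  [/\ (forall u, tdom u -> ~ prec u u),
      (forall u v w, tdom u -> tdom v -> tdom w -> prec u v -> prec v w -> prec u w),
      (forall u v, tdom u -> tdom v -> [\/ u = v, prec u v | prec v u]),
      (forall u v w, tdom u -> tdom v -> tdom w -> prec u v -> prec (vadd u w) (vadd v w)) &
      well_founded (fun a b => [/\ tdom a, tdom b & prec a b])].

Definition is_markov (n : nat) L B :=
  forall u, nonneg u -> supported_in n u ->
  forall v w, fiber L u v -> fiber L u w -> mconn (fiber L u) B v w.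

Definition is_groebner (prec : vec c -> vec c -> Prop) (n : nat) L B :=
  forall u, nonneg u -> supported_in n u ->
  forall m, fiber L u m -> (forall v, fiber L u v -> v <> m -> prec m v) ->
  dreach (fiber L u) B prec u m.

Definition is_ugb (n : nat) L B :=
  forall prec, is_term_order prec -> is_groebner prec n L B.

Definition conf_le u v :=
  forall i j, 0 <= u i j * v i j /\ `|u i j| <= `|v i j|.

Definition is_graver (n : nat) L G :=
  forall v, G v <-> [/\ L v, v <> vzero &
     forall w, L w -> w <> vzero -> conf_le w v -> w = v].

Definition equivariant (P : nat -> (vec c -> Prop) -> (vec c -> Prop) -> Prop)
  (n : nat) L B := (forall b, B b -> L b) /\ P n L (sym_orbit n B).

Definition X_stabilizes (P : nat -> (vec c -> Prop) -> (vec c -> Prop) -> Prop)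
  (L : nat -> vec c -> Prop) :=
  exists p, (0 < p)%N /\ exists B, forall n, (p <= n)%N -> equivariant P n (L n) B.

Definition chain_stabilizes (L : nat -> vec c -> Prop) :=
  exists p, (0 < p)%N /\ forall m n, (p <= m)%N -> (m <= n)%N ->
    forall v, L n v <-> zspan (sym_orbit n (L m)) v.

End Defs.

(* Main.v *)
Require Import Defs.
From mathcomp Require Import all_boot all_order all_algebra all_fingroup.
From mathcomp Require Import zify.
From Stdlib Require Import Classical ClassicalEpsilon FunctionalExtensionality.
Set Implicit Arguments. Unset Strict Implicit. Unset Printing Implicit Defensive.
Import Order.TTheory GRing.Theory Num.Theory.
Lemma fchoice (A B : Type) (P : A -> B -> Prop) :
  (forall a, exists b, P a b) -> exists f : A -> B, forall a, P a (f a).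
Proof.
move=> H; exists (fun a => proj1_sig (constructive_indefinite_description _ (H a))).
move=> a; exact: (proj2_sig (constructive_indefinite_description _ (H a))).
Qed.

Lemma nat_min (P : nat -> Prop) : (exists n, P n) -> exists n, P n /\ forall m, P m -> (n <= m)%N.
Proof.
move=> [n Pn]; elim/ltn_ind: n Pn => n IH Pn.
case: (classic (exists m, P m /\ (m < n)%N)) => [[m [Pm lt]]|H].
  exact: IH lt Pm.
exists n; split => // m Pm; case: (leqP n m) => // lt; exfalso; apply: H; by exists m.
Qed.

Definition good (A : Type) (R : A -> A -> Prop) (f : nat -> A) :=
  exists i j, (i < j)%N /\ R (f i) (f j).
Definition wqo (A : Type) (R : A -> A -> Prop) := forall f : nat -> A, good R f.
Definition incr (phi : nat -> nat) := forall i, (phi i < phi i.+1)%N.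
Definition omono (A : Type) (R : A -> A -> Prop) := forall f : nat -> A,
  exists phi, incr phi /\ forall i j, (i < j)%N -> R (f (phi i)) (f (phi j)).

Lemma incr_lt phi : incr phi -> forall i j, (i < j)%N -> (phi i < phi j)%N.
Proof.
move=> H i j; elim: j => // j IH; rewrite ltnS leq_eqVlt => /orP [/eqP -> // | /IH h].
exact: ltn_trans h (H j).
Qed.

Lemma incr_le phi : incr phi -> forall i j, (i <= j)%N -> (phi i <= phi j)%N.
Proof.
move=> H i j; rewrite leq_eqVlt => /orP [/eqP -> // | /(incr_lt H) h]; exact: ltnW.
Qed.

Lemma omono_wqo A (R : A -> A -> Prop) : omono R -> wqo R.
Proof. move=> H f; have [phi [ip Hp]] := H f; exists (phi 0), (phi 1); split; [exact: ip|exact: Hp]. Qed.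

Lemma chain_trans A (R : A -> A -> Prop) (g : nat -> A) :
  (forall x y z, R x y -> R y z -> R x z) -> (forall k, R (g k) (g k.+1)) ->
  forall i j, (i < j)%N -> R (g i) (g j).
Proof.
move=> tr H i j; elim: j => // j IH; rewrite ltnS leq_eqVlt => /orP [/eqP -> // | /IH h].
exact: tr h (H j).
Qed.

Lemma wqo_omono A (R : A -> A -> Prop) :
  (forall x y z, R x y -> R y z -> R x z) -> wqo R -> omono R.
Proof.
move=> tr W f.
pose term i := ~ exists j, (i < j)%N /\ R (f i) (f j).
case: (classic (exists M, forall i, (M <= i)%N -> ~ term i)) => [[M HM]|H].
  have [nx Hnx] : exists nx : nat -> nat, forall i, (M <= i)%N -> (i < nx i)%N /\ R (f i) (f (nx i)).
    apply: (fchoice (P := fun i b => (M <= i)%N -> (i < b)%N /\ R (f i) (f b))) => i.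
    case: (leqP M i) => [hi|hi]; last by exists i => hMi; exfalso; lia.
    have := HM i hi; rewrite /term => /NNPP [j [h1 h2]]; by exists j.
  pose phi k := iter k nx M.
  have phiM : forall k, (M <= phi k)%N.
    elim=> [|k IH] //=; exact: leq_trans IH (ltnW (Hnx _ IH).1).
  exists phi; split; first by move=> k; exact: (Hnx _ (phiM k)).1.
  apply: chain_trans => // k; exact: (Hnx _ (phiM k)).2.
have H' : forall M, exists i, (M <= i)%N /\ term i.
  move=> M; apply: NNPP => H1; apply: H; exists M => i hi ti; apply: H1; by exists i.
have [t Ht] := fchoice H'.
pose psi k := iter k (fun x => t x.+1) (t 0).
have ip : incr psi by move=> k /=; exact: (Ht _).1.
have tp : forall k, term (psi k) by case=> [|k] /=; exact: (Ht _).2.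
have [i [j [lt hR]]] := W (fun k => f (psi k)).
exfalso; apply: (tp i); exists (psi j); split => //; exact: incr_lt.
Qed.

Lemma omono_and A (R1 R2 : A -> A -> Prop) : omono R1 -> omono R2 ->
  omono (fun x y => R1 x y /\ R2 x y).
Proof.
move=> H1 H2 f; have [p1 [i1 h1]] := H1 f; have [p2 [i2 h2]] := H2 (fun k => f (p1 k)).
exists (fun k => p1 (p2 k)); split; first by move=> k; apply: incr_lt.
move=> i j lt; split; [apply: h1; exact: incr_lt | exact: h2].
Qed.

Lemma omono_preim A B (R : B -> B -> Prop) (h : A -> B) : omono R -> omono (fun x y => R (h x) (h y)).
Proof. move=> H f; exact: H (fun k => h (f k)). Qed.

Lemma omono_mono A (R R' : A -> A -> Prop) : (forall x y, R x y -> R' x y) -> omono R -> omono R'.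
Proof. move=> HR H f; have [p [ip hp]] := H f; exists p; split => // i j lt; exact/HR/hp. Qed.

Lemma omono_true A : omono (fun _ _ : A => True).
Proof. move=> f; exists id; split => // i. Qed.

Lemma omono_nat : omono (fun m n : nat => (m <= n)%N).
Proof.
apply: wqo_omono; first by move=> x y z; exact: leq_trans.
move=> f.
have [v [[i0 hi0] hv]] := nat_min (P := fun v => exists i, f i = v) (ex_intro _ (f 0) (ex_intro _ 0 erefl)).
exists i0, i0.+1; split => //; rewrite hi0; apply: hv; by exists i0.+1.
Qed.

Lemma omono_bool : omono (fun a b : bool => a = b).
Proof.
apply: wqo_omono; first by move=> x y z -> .
move=> f; case E0: (f 0); case E1: (f 1); case E2: (f 2).
all: first [ by exists 0, 1; rewrite E0 E1 | by exists 0, 2; rewrite E0 E2 | by exists 1, 2; rewrite E1 E2 ].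
Qed.

Section Higman.
Variable A : Type.
Variable R : A -> A -> Prop.

Inductive emb : seq A -> seq A -> Prop :=
| emb_nil t : emb [::] t
| emb_skip s b t : emb s t -> emb s (b :: t)
| emb_cons a b s t : R a b -> emb s t -> emb (a :: s) (b :: t).

Lemma emb_idx (x0 : A) s t : emb s t -> exists h : nat -> nat,
  [/\ (forall i, (i < size s)%N -> (h i < size t)%N),
      (forall i j, (i < j)%N -> (j < size s)%N -> (h i < h j)%N) &
      (forall i, (i < size s)%N -> R (nth x0 s i) (nth x0 t (h i)))].
Proof.
elim=> [t0|s0 b t0 _ [h [h1 h2 h3]]|a b s0 t0 Rab _ [h [h1 h2 h3]]].
- by exists id; split.
- exists (fun i => (h i).+1); split => /=.
  + by move=> i /h1.
  + by move=> i j lt js; rewrite ltnS; apply: h2.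
  + by move=> i /h3.
- exists (fun i => if i is i'.+1 then (h i').+1 else 0); split => /=.
  + by case=> [|i] //= /h1.
  + case=> [|i] [|j] //= lt js; rewrite ltnS; exact: h2.
  + by case=> [|i] //= /h3.
Qed.

Hypothesis HR : omono R.

Definition bad (g : nat -> seq A) := forall i j, (i < j)%N -> ~ emb (g i) (g j).

Definition ext (p : seq (seq A)) (g : nat -> seq A) := forall i, (i < size p)%N -> g i = nth [::] p i.
Definition Ex p := exists g, bad g /\ ext p g.

Theorem higman : wqo emb.
Proof.
move=> f; apply: NNPP => Hf.
have badf : bad f by move=> i j lt he; apply: Hf; exists i, j.
have minsize : forall p, Ex p -> exists w, (exists g, [/\ bad g, ext p g & g (size p) = w]) /\
    forall g, bad g -> ext p g -> (size w <= size (g (size p)))%N.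
  move=> p [g0 [b0 e0]].
  have [n [[g [bg eg sg]] hn]] := nat_min (P := fun n => exists g, [/\ bad g, ext p g & size (g (size p)) = n])
     (ex_intro _ _ (ex_intro _ g0 (And3 b0 e0 erefl))).
  exists (g (size p)); split; first by exists g.
  move=> g' bg' eg'; rewrite sg; apply: hn; by exists g'.
have [nx Hnx] := fchoice (P := fun p w => Ex p -> (exists g, [/\ bad g, ext p g & g (size p) = w]) /\
    forall g, bad g -> ext p g -> (size w <= size (g (size p)))%N)
  (fun p => match classic (Ex p) with
            | or_introl h => let: ex_intro w hw := minsize p h in ex_intro _ w (fun _ => hw)
            | or_intror h => ex_intro _ [::] (fun e => False_ind _ (h e)) end).
pose pre k := iter k (fun p => rcons p (nx p)) [::].
pose m k := nx (pre k).
have size_pre : forall k, size (pre k) = k by elim=> //= k IH; rewrite size_rcons IH.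
have nth_pre : forall k i, (i < k)%N -> nth [::] (pre k) i = m i.
  elim=> // k IH i; rewrite ltnS leq_eqVlt => /orP [/eqP ->|lt] /=.
    by rewrite nth_rcons size_pre ltnn eqxx.
  by rewrite nth_rcons size_pre lt IH.
have Ex_pre : forall k, Ex (pre k).
  elim=> [|k IH]; first by exists f; split => // i.
  have [[g [bg eg gk]] _] := Hnx _ IH.
  exists g; split; first exact: bg.
  move=> i; rewrite size_pre ltnS leq_eqVlt => /orP [/eqP ->|lt].
    by rewrite nth_pre // /m -gk size_pre.
  rewrite nth_pre; last exact: ltnW lt.
  by move: eg; rewrite /ext => ->; rewrite ?size_pre // nth_pre.
have mbad : bad m.
  move=> i j lt.
  have [[g [bg eg gk]] _] := Hnx _ (Ex_pre j.+1).
  move: eg; rewrite /ext size_pre => eg.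
  rewrite -(nth_pre j.+1 i); last exact: ltnW.
  rewrite -(nth_pre j.+1 j) // -!eg //; last exact: ltnW.
  exact: bg.
have mmin : forall k g, bad g -> (forall i, (i < k)%N -> g i = m i) -> (size (m k) <= size (g k))%N.
  move=> k g bg eg; have [_ h] := Hnx _ (Ex_pre k).
  have := h g bg; rewrite size_pre; apply => i; rewrite size_pre => lt; rewrite nth_pre //; exact: eg.
have [ht Hht] : exists ht : nat -> A * seq A, forall k, m k = (ht k).1 :: (ht k).2.
  apply: (fchoice (P := fun k (p : A * seq A) => m k = p.1 :: p.2)) => k; case E: (m k) => [|a t]; last by exists (a, t).
  exfalso; apply: (mbad k k.+1) => //; rewrite E; exact: emb_nil.
have [phi [ip hp]] := HR (fun k => (ht k).1).
pose g i := if (i < phi 0)%N then m i else (ht (phi (i - phi 0))).2.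
have gbad : bad g.
  move=> i j lt; rewrite /g.
  case: (ltnP j (phi 0)) => hj.
    rewrite (ltn_trans lt hj); exact: mbad.
  case: (ltnP i (phi 0)) => hi.
    move=> he; apply: (mbad i (phi (j - phi 0))).
      exact: leq_trans hi (incr_le ip (leq0n _)).
    rewrite (Hht (phi (j - phi 0))); exact: emb_skip.
  move=> he; apply: (mbad (phi (i - phi 0)) (phi (j - phi 0))).
    apply: incr_lt => //; lia.
  rewrite !Hht; apply: emb_cons => //; apply: hp; lia.
have H0 : forall i, (i < phi 0)%N -> g i = m i by move=> i lt; rewrite /g lt.
have := mmin (phi 0) g gbad H0; rewrite /g ltnn subnn (Hht (phi 0)) /=; lia.
Qed.
End Higman.

Section Vec.
Variable c : nat.
Local Open Scope ring_scope.
Implicit Types (u v w : vec c).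

Lemma vext u v : (forall i j, u i j = v i j) -> u = v.
Proof.
move=> H; apply: functional_extensionality => i; apply: functional_extensionality => j; exact: H.
Qed.

Definition vcomp u (f : nat -> nat) : vec c := fun i j => u (f i) j.

Definition bperm (N : nat) (f g : nat -> nat) :=
  [/\ forall i, f (g i) = i, forall i, g (f i) = i, forall i, (N <= i)%N -> f i = i &
      forall i, (N <= i)%N -> g i = i].

Lemma bperm_sym N f g : bperm N f g -> bperm N g f.
Proof. by case=> *; split. Qed.

Lemma bperm_lt N f g i : bperm N f g -> (i < N)%N -> (f i < N)%N.
Proof.
case=> h1 h2 h3 h4 lt; case: (ltnP (f i) N) => // ge.
have := h2 i; rewrite h4 // => e; lia.
Qed.

Lemma bperm_mon N M f g : bperm N f g -> (N <= M)%N -> bperm M f g.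
Proof.
case=> h1 h2 h3 h4 le; split => // i hi; [apply: h3|apply: h4]; exact: leq_trans le hi.
Qed.

Lemma bperm_id N : bperm N id id. Proof. by split. Qed.

Lemma bperm_comp N f g f' g' : bperm N f g -> bperm N f' g' ->
  bperm N (fun i => f (f' i)) (fun i => g' (g i)).
Proof.
case=> a1 a2 a3 a4 [b1 b2 b3 b4]; split=> i.
- by rewrite b1 a1.
- by rewrite a2 b2.
- by move=> hi; rewrite b3 // a3.
- by move=> hi; rewrite a4 // b4.
Qed.

Definition swap (a b i : nat) : nat := if i == a then b else if i == b then a else i.

Lemma swapK a b i : swap a b (swap a b i) = i.
Proof. rewrite /swap; (repeat case: eqP); lia. Qed.

Lemma bperm_swap N a b : (a < N)%N -> (b < N)%N -> bperm N (swap a b) (swap a b).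
Proof.
move=> ha hb; split => [i|i|i hi|i hi]; rewrite ?swapK //; rewrite /swap; (repeat case: eqP); lia.
Qed.

Lemma bperm_ext N (h : nat -> nat) (S : seq nat) : uniq S ->
  (forall s, s \in S -> (s < N)%N /\ (h s < N)%N) -> {in S &, injective h} ->
  exists f g, bperm N f g /\ forall s, s \in S -> f s = h s.
Proof.
elim: S => [|s S IH] /=; first by move=> _ _ _; exists id, id; split => //; exact: bperm_id.
move=> /andP [sS uS] HS inj.
have [f' [g' [bp hf']]] : exists f g, bperm N f g /\ forall s, s \in S -> f s = h s.
  apply: IH => //.
    by move=> x hx; apply: HS; rewrite inE hx orbT.
  by move=> x y hx hy; apply: inj; rewrite inE ?hx ?hy orbT.
have [sN hsN] := HS s (mem_head s S).
exists (fun i => swap (f' s) (h s) (f' i)), (fun i => g' (swap (f' s) (h s) i)); split.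
  have bs : bperm N (swap (f' s) (h s)) (swap (f' s) (h s)).
    by apply: bperm_swap => //; exact: (bperm_lt bp sN).
  exact: (bperm_comp bs bp).
move=> x; rewrite inE => /orP [/eqP ->|hx]; first by rewrite /swap eqxx.
have xs : x != s by apply/eqP => e; move: sS; rewrite -e hx.
have ne1 : h x != f' s.
  rewrite -hf' //; apply/eqP => e; case: bp => _ h2 _ _.
  by move/eqP: xs; apply; rewrite -(h2 x) e h2.
have ne2 : h x != h s.
  apply/eqP => e; move/eqP: xs; apply; apply: inj => //; rewrite inE ?hx ?eqxx ?orbT //.
by rewrite (hf' x hx) /swap (negbTE ne1) (negbTE ne2).
Qed.

Lemma exists_sact N f g : bperm N f g -> exists s : {perm 'I_N}, forall u, sact s u = vcomp u f.
Proof.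
move=> bp.
have fN : forall i : 'I_N, (f i < N)%N by move=> i; exact: bperm_lt bp (ltn_ord i).
pose F := fun i : 'I_N => Ordinal (fN i).
have injF : injective F.
  move=> i j /(congr1 val) /= e; apply: val_inj; case: bp => _ h2 _ _.
  by rewrite /= -(h2 i) e h2.
exists ((perm injF)^-1)%g => u; apply: vext => i j; rewrite /sact /vcomp invgK /pext.
case: insubP => [k _ <-|]; first by rewrite permE.
move=> hi; case: bp => _ _ h3 _; rewrite h3 //; rewrite leqNgt; exact: hi.
Qed.

Lemma pext_lt n (s : {perm 'I_n}) (k : 'I_n) : pext s k = s k.
Proof. by rewrite /pext valK. Qed.

Lemma pext_ge n (s : {perm 'I_n}) i : (n <= i)%N -> pext s i = i.
Proof. by move=> hi; rewrite /pext insubN // -leqNgt. Qed.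

Lemma bperm_pext n (s : {perm 'I_n}) : bperm n (pext s^-1) (pext s).
Proof.
split => [i|i|i hi|i hi]; try by rewrite pext_ge.
- case: (ltnP i n) => hi; last by rewrite !pext_ge.
  change i with (nat_of_ord (Ordinal hi)); by rewrite !pext_lt permK.
- case: (ltnP i n) => hi; last by rewrite !pext_ge.
  change i with (nat_of_ord (Ordinal hi)); by rewrite !pext_lt permKV.
Qed.

Lemma sact_vcomp n (s : {perm 'I_n}) u : sact s u = vcomp u (pext s^-1).
Proof. by []. Qed.

Lemma perm_restrict n K phi psi v h : bperm K phi psi -> supported_in n v -> supported_in n h ->
  v = vcomp h phi -> exists tau taui, bperm n tau taui /\ v = vcomp h tau.
Proof.
move=> bp sv sh ev.
have evp : forall i j, v i j = h (phi i) j by move=> i j; rewrite ev.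
pose S := [seq i <- iota 0 n | (phi i < n)%N].
have [tau [taui [bt ht]]] : exists f g, bperm n f g /\ forall s, s \in S -> f s = phi s.
  apply: bperm_ext.
  - by rewrite filter_uniq // iota_uniq.
  - move=> s; rewrite mem_filter mem_iota => /andP [h1 /andP [_ h2]]; split => //; lia.
  - move=> x y _ _ e; case: bp => _ h2 _ _; by rewrite -(h2 x) e h2.
exists tau, taui; split => //; apply: vext => i j; rewrite /vcomp.
case: (ltnP i n) => hi; last by case: bt => _ _ h3 _; rewrite h3 // sv // sh.
case: (ltnP (phi i) n) => hp.
  rewrite ht ?evp // mem_filter mem_iota hp /=; lia.
rewrite evp sh //.
case: (h (tau i) j =P 0) => // nz; exfalso.
case: bt => t1 t2 t3 t4.
pose i' := psi (tau i).
have e1 : phi i' = tau i by rewrite /i'; case: bp.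
have ti : (tau i < n)%N by apply: (bperm_lt (f:=tau) (g:=taui)) => //; split.
have i'n : (i' < n)%N.
  case: (ltnP i' n) => // ge; exfalso; apply: nz; rewrite -e1 -evp sv //.
have : tau i' = phi i' by apply: ht; rewrite mem_filter mem_iota e1 ti /=; lia.
rewrite e1 => e2.
have ii : i' = i by rewrite -(t2 i') e2 t2.
move: hp; rewrite -ii e1; lia.
Qed.

Definition cint (a b : int) := (0 <= a /\ a <= b) \/ (b <= a /\ a <= 0).

Lemma cintE a b : (0 <= a * b /\ `|a| <= `|b|) <-> cint a b.
Proof.
rewrite /cint; split.
  case: (lerP 0 a) => ha; case: (lerP 0 b) => hb; nia.
case: (lerP 0 a) => ha; case: (lerP 0 b) => hb; nia.
Qed.

Lemma conf_leE u v : conf_le u v <-> forall i j, cint (u i j) (v i j).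
Proof.
split => H i j; [apply/cintE; exact: H | apply/cintE; exact: H].
Qed.

Lemma omono_cint : omono cint.
Proof.
have H := omono_and (omono_preim (fun a : int => 0 <= a) omono_bool)
                    (omono_preim (fun a : int => absz a) omono_nat).
apply: omono_mono H => a b [e le]; move: e le; rewrite /cint.
case: (lerP 0 a) => ha; case: (lerP 0 b) => hb //= _; lia.
Qed.

Definition Rrow (x y : 'I_c -> int) := forall j, cint (x j) (y j).

Lemma omono_row : omono Rrow.
Proof.
suff H : forall k, omono (fun x y : 'I_c -> int => forall j : 'I_c, (j < k)%N -> cint (x j) (y j)).
  apply: omono_mono (H c) => x y h j; apply: h; exact: ltn_ord.
elim=> [|k IH]; first by apply: omono_mono (@omono_true _) => x y _ j.
have Hk : omono (fun x y : 'I_c -> int => forall j : 'I_c, val j = k -> cint (x j) (y j)).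
  case: (ltnP k c) => hk.
    apply: omono_mono (omono_preim (fun x : 'I_c -> int => x (Ordinal hk)) omono_cint) => x y h j ej.
    have -> : j = Ordinal hk by apply: val_inj.
    exact h.
  apply: omono_mono (@omono_true _) => x y _ j ej; exfalso; have := ltn_ord j; rewrite -[nat_of_ord j]/(val j) ej; lia.
apply: omono_mono (omono_and IH Hk) => x y [h1 h2] j lt.
case: (ltnP j k) => hj; [exact: h1 | apply: h2; change (nat_of_ord j = k); lia].
Qed.

Lemma vec_wqo (v : nat -> vec c) : (forall k, finsupp (v k)) ->
  exists k l, (k < l)%N /\ exists N f g, bperm N f g /\ conf_le (v k) (vcomp (v l) g).
Proof.
move=> fs.
have [nb Hnb] := fchoice fs.
pose rows k := [seq (fun j => v k i j) | i <- iota 0 (nb k)].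
have [k [l [lt he]]] := higman omono_row rows.
have [h [h1 h2 h3]] := emb_idx (fun _ => 0) he.
have sr : forall k, size (rows k) = nb k by move=> k'; rewrite size_map size_iota.
rewrite !sr in h1 h2 h3.
exists k, l; split => //.
have [G [Gi [bp hG]]] : exists f g, bperm (maxn (nb k) (nb l)) f g /\
    forall s, s \in iota 0 (nb k) -> f s = h s.
  apply: bperm_ext; first exact: iota_uniq.
    move=> s; rewrite mem_iota add0n => hs; have := h1 s hs; lia.
  move=> x y; rewrite !mem_iota !add0n => hx hy e.
  case: (ltngtP x y) => // [xy|yx]; [have := h2 x y xy hy | have := h2 y x yx hx]; lia.
exists (maxn (nb k) (nb l)), Gi, G; split; first exact: bperm_sym.
apply/conf_leE => i j; rewrite /vcomp.
case: (ltnP i (nb k)) => hi.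
  have := h3 i hi j; rewrite (nth_map 0%N) ?size_iota // nth_iota // (nth_map 0%N) ?size_iota ?h1 //.
  by rewrite nth_iota ?h1 // !add0n hG // mem_iota.
rewrite (Hnb k) //; rewrite /cint; lia.
Qed.

End Vec.

Section Lat.
Variable c : nat.
Local Open Scope ring_scope.
Implicit Types (u v w g : vec c).

Lemma conf_refl v : conf_le v v.
Proof. apply/conf_leE => i j; rewrite /cint; lia. Qed.

Lemma conf_trans u v w : conf_le u v -> conf_le v w -> conf_le u w.
Proof.
move=> /conf_leE h1 /conf_leE h2; apply/conf_leE => i j.
have := h1 i j; have := h2 i j; rewrite /cint; lia.
Qed.

Lemma conf_sub g w : conf_le g w -> conf_le (vsub w g) w.
Proof. move=> /conf_leE h; apply/conf_leE => i j; have := h i j; rewrite /cint /vsub; lia. Qed.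

Lemma conf_supp n u v : conf_le u v -> supported_in n v -> supported_in n u.
Proof. move=> /conf_leE h sv i j hi; have := h i j; rewrite sv // /cint; lia. Qed.

Lemma vsub_ne g w : g <> (@vzero c) -> vsub w g <> w.
Proof.
move=> gz e; apply: gz; apply: vext => i j.
have := congr1 (fun f => f i j) e; rewrite /vsub /vzero /=; lia.
Qed.

Lemma vneq u v : u <> v -> exists i j, u i j <> v i j.
Proof.
move=> ne; apply: NNPP => H; apply: ne; apply: vext => i j; apply: NNPP => h.
apply: H; by exists i, j.
Qed.

Definition vnorm n (v : vec c) : nat := (\sum_(i < n) \sum_(j < c) `|v i j|%N)%N.

Lemma vnorm_lt n u v : conf_le u v -> u <> v -> supported_in n v -> (vnorm n u < vnorm n v)%N.
Proof.
move=> /conf_leE h ne sv.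
have [i [j nij]] := vneq ne.
have hi : (i < n)%N.
  case: (ltnP i n) => // ge; exfalso; apply: nij; have := h i j; rewrite sv // /cint; lia.
have le : forall i j, (`|u i j| <= `|v i j|)%N by move=> i' j'; have := h i' j'; rewrite /cint; lia.
have lt : (`|u i j| < `|v i j|)%N by have := h i j; rewrite /cint; lia.
rewrite /vnorm (bigD1 (Ordinal hi)) //= [X in (_ < X)%N](bigD1 (Ordinal hi)) //=.
rewrite (bigD1 j) //= [X in (_ < X + _)%N](bigD1 j) //=.
have s1 : (\sum_(j0 < c | j0 != j) `|u i j0| <= \sum_(j0 < c | j0 != j) `|v i j0|)%N.
  by apply: leq_sum => k _.
have s2 : (\sum_(i0 < n | i0 != Ordinal hi) \sum_(j0 < c) `|u i0 j0| <=
           \sum_(i0 < n | i0 != Ordinal hi) \sum_(j0 < c) `|v i0 j0|)%N.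
  by apply: leq_sum => k _; apply: leq_sum => k' _.
move: s1 s2 lt.
set a1 := (\sum_(j0 < c | j0 != j) `|u i j0|)%N. set a2 := (\sum_(j0 < c | j0 != j) `|v i j0|)%N.
set b1 := (\sum_(i0 < n | i0 != Ordinal hi) _)%N. set b2 := (\sum_(i0 < n | i0 != Ordinal hi) _)%N.
lia.
Qed.

Definition graverp (L : vec c -> Prop) g :=
  [/\ L g, g <> (@vzero c) & forall w, L w -> w <> (@vzero c) -> conf_le w g -> w = g].

Variable n : nat.
Variable L : vec c -> Prop.
Hypothesis hL : is_lattice n L.

Lemma lat0 : L (@vzero c). Proof. by case: hL. Qed.
Lemma latB u v : L u -> L v -> L (vsub u v). Proof. by case: hL => _ h _; apply: h. Qed.
Lemma latS u : L u -> supported_in n u. Proof. by case: hL => _ _ h; apply: h. Qed.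
Lemma latN u : L u -> L (vsub (@vzero c) u). Proof. by move=> h; apply: latB => //; exact: lat0. Qed.

Lemma graver_below w : L w -> w <> (@vzero c) -> exists g, graverp L g /\ conf_le g w.
Proof.
suff H : forall k w, (vnorm n w < k)%N -> L w -> w <> (@vzero c) -> exists g, graverp L g /\ conf_le g w.
  by apply: H (ltnSn _).
elim=> // k IH {}w hk Lw wz.
case: (classic (graverp L w)) => [gw|ngw]; first by exists w; split => //; exact: conf_refl.
have [w' [Lw' w'z cw' ne]] : exists w', [/\ L w', w' <> (@vzero c), conf_le w' w & w' <> w].
  apply: NNPP => H; apply: ngw; split => // w' h1 h2 h3; apply: NNPP => h4; apply: H; by exists w'; split.
have hlt : (vnorm n w' < k)%N.
  by apply: leq_trans (vnorm_lt cw' ne (latS Lw)) _; rewrite -ltnS.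
have [g [gg cg]] := IH w' hlt Lw' w'z.
exists g; split => //; exact: conf_trans cg cw'.
Qed.

Lemma graver_span (L' : vec c -> Prop) : L' (@vzero c) -> (forall u v, L' u -> L' v -> L' (vsub u v)) ->
  (forall g, graverp L g -> L' g) -> forall w, L w -> L' w.
Proof.
move=> h0 hB hG.
suff H : forall k w, (vnorm n w < k)%N -> L w -> L' w by move=> w; apply: H (ltnSn _).
elim=> // k IH w hk Lw.
case: (classic (w = (@vzero c))) => [->|wz] //.
have [g [gg cg]] := graver_below Lw wz.
have Lg : L g by case: gg.
have gz : g <> (@vzero c) by case: gg.
have h1 : L' (vsub w g).
  apply: IH; last exact: latB.
  rewrite -ltnS; apply: leq_trans hk; rewrite ltnS.
  apply: vnorm_lt (latS Lw); [exact: conf_sub | exact: vsub_ne].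
have -> : w = vsub (vsub w g) (vsub (@vzero c) g) by apply: vext => i j; rewrite /vsub /vzero; lia.
apply: (hB _ _ h1); apply: (hB _ _ h0); exact: hG.
Qed.

Lemma markov_of (B : vec c -> Prop) : (forall g, graverp L g -> B g) -> is_markov n L B.
Proof.
move=> hB u nu su.
suff H : forall k v w, (vnorm n (vsub v w) < k)%N -> fiber L u v -> fiber L u w ->
    mconn (fiber L u) B w v.
  by move=> v w fv fw; apply: H (ltnSn _) fw fv.
elim=> // k IH v w hk fv fw.
case: (classic (v = w)) => [->|ne]; first exact: mconn_refl.
have Ld : L (vsub v w).
  have -> : vsub v w = vsub (vsub u w) (vsub u v) by apply: vext => i j; rewrite /vsub; lia.
  apply: latB; [exact: fw.2 | exact: fv.2].
have dz : vsub v w <> (@vzero c).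
  move=> e; apply: ne; apply: vext => i j; have := congr1 (fun f => f i j) e; rewrite /vsub /vzero /=; lia.
have [g [gg cg]] := graver_below Ld dz.
have Lg : L g by case: gg.
have gz : g <> (@vzero c) by case: gg.
have fv' : fiber L u (vsub v g).
  split.
    move=> i j; have := fv.1 i j; have := fw.1 i j; move/conf_leE: cg => /(_ i j).
    rewrite /cint /vsub; lia.
  have -> : vsub u (vsub v g) = vsub (vsub u v) (vsub (@vzero c) g) by apply: vext => i j; rewrite /vsub /vzero; lia.
  apply: latB; [exact: fv.2 | exact: latN].
have h1 : mconn (fiber L u) B w (vsub v g).
  apply: IH fv' fw.
  have -> : vsub (vsub v g) w = vsub (vsub v w) g by apply: vext => i j; rewrite /vsub; lia.
  rewrite -ltnS; apply: leq_trans hk; rewrite ltnS.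
  apply: vnorm_lt (latS Ld); [exact: conf_sub | exact: vsub_ne].
apply: mconn_step h1 fv _; right.
have -> : vopp (vsub (vsub v g) v) = g by apply: vext => i j; rewrite /vopp /vsub; lia.
exact: hB.
Qed.

Definition vpos g : vec c := fun i j => if 0 <= g i j then g i j else 0.

Lemma tdom_supp v : nonneg v -> supported_in n v -> tdom v.
Proof. by move=> h1 h2; split => //; exists n. Qed.

Lemma groeb_step prec : is_term_order prec -> forall k x y, (vnorm n (vsub x y) < k)%N ->
  nonneg x -> nonneg y -> supported_in n x -> supported_in n y -> L (vsub x y) -> prec y x ->
  exists g, [/\ graverp L g, conf_le g (vsub x y) & prec (vsub x g) x].
Proof.
case=> irr tr tot add _.
elim=> // k IH x y hk nx ny sx sy Ld pyx.
have dz : vsub x y <> (@vzero c).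
  move=> e; have xy : x = y.
    apply: vext => i j; have := congr1 (fun f => f i j) e; rewrite /vsub /vzero /=; lia.
  by subst y; apply: (irr x (tdom_supp nx sx)).
have [g [gg cg]] := graver_below Ld dz.
have Lg : L g by case: gg.
have gz : g <> (@vzero c) by case: gg.
have sg := latS Lg.
have cgp := (iffLR (conf_leE _ _) cg).
pose gp := vpos g; pose gn := vpos (vopp g).
have tgp : tdom gp.
  apply: tdom_supp; first by move=> i j; rewrite /gp /vpos; case: ifP => //; lia.
  by move=> i j hi; rewrite /gp /vpos sg.
have tgn : tdom gn.
  apply: tdom_supp; first by move=> i j; rewrite /gn /vpos /vopp; case: ifP => //; lia.
  by move=> i j hi; rewrite /gn /vpos /vopp sg.
have tx := tdom_supp nx sx.
have ty := tdom_supp ny sy.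
case: (tot _ _ tgp tgn) => [e|p1|p2].
- exfalso; apply: gz; apply: vext => i j; have := congr1 (fun f => f i j) e.
  rewrite /gp /gn /vpos /vopp /vzero; case: ifP; case: ifP; lia.
- (* prec gp gn : go to z = y + g *)
  pose c1 := vsub y gn.
  have tc1 : tdom c1.
    apply: tdom_supp.
      move=> i j; have := cgp i j; have := nx i j; have := ny i j.
      rewrite /c1 /gn /vpos /vopp /vsub /cint; case: ifP; lia.
    by move=> i j hi; rewrite /c1 /gn /vpos /vopp /vsub sg // sy.
  pose z := vadd gp c1.
  have tz : tdom z.
    apply: tdom_supp.
      move=> i j; have := tc1.1 i j; have := tgp.1 i j; rewrite /z /vadd; lia.
    by move=> i j hi; rewrite /z /vadd /c1 /gp /gn /vpos /vopp /vsub sg // sy.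
  have pzy : prec z y.
    have := add _ _ _ tgp tgn tc1 p1.
    have -> : vadd gn c1 = y.
      by apply: vext => i j; rewrite /vadd /c1 /vsub /gn /vpos /vopp; case: ifP; lia.
    by [].
  have pzx : prec z x by apply: (tr z y x tz ty tx pzy pyx).
  have exz : vsub x z = vsub (vsub x y) g.
    by apply: vext => i j; rewrite /z /c1 /vadd /vsub /gp /gn /vpos /vopp; case: ifP; case: ifP; lia.
  have h1 : (vnorm n (vsub x z) < k)%N.
    rewrite exz -ltnS; apply: leq_trans hk; rewrite ltnS.
    apply: vnorm_lt (latS Ld); [exact: conf_sub | exact: vsub_ne].
  have h2 : supported_in n z.
    by move=> i j hi; rewrite /z /vadd /c1 /gp /gn /vpos /vopp /vsub sg // sy.
  have h3 : L (vsub x z) by rewrite exz; apply: latB.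
  have [g' [gg' cg' pg']] := IH x z h1 nx tz.1 sx h2 h3 pzx.
  exists g'; split => //; apply: conf_trans cg' _; rewrite exz; exact: conf_sub.
- pose c0 := vsub x gp.
  have tc0 : tdom c0.
    apply: tdom_supp.
      move=> i j; have := cgp i j; have := nx i j; have := ny i j.
      rewrite /c0 /gp /vpos /vsub /cint; case: ifP; lia.
    by move=> i j hi; rewrite /c0 /gp /vpos /vsub sg // sx.
  exists g; split => //.
  have := add _ _ _ tgn tgp tc0 p2.
  have -> : vadd gn c0 = vsub x g.
    by apply: vext => i j; rewrite /vadd /c0 /vsub /gn /gp /vpos /vopp; case: ifP; case: ifP; lia.
  have -> : vadd gp c0 = x.
    by apply: vext => i j; rewrite /vadd /c0 /vsub /gp /vpos; case: ifP; lia.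
  by [].
Qed.

Lemma dreach_pre (F B : vec c -> Prop) (prec : vec c -> vec c -> Prop) (x y m : vec c) : dreach F B prec y m -> F y -> pmB B (vsub x y) -> prec y x ->
  dreach F B prec x m.
Proof.
elim=> [v|a v w' _ IH Fw pw pr] Fy pb pyx.
  apply: dreach_step (dreach_refl _ _ _ x) Fy pb pyx.
apply: dreach_step (IH Fy pb pyx) Fw pw pr.
Qed.

Lemma groebner_of prec (B : vec c -> Prop) : is_term_order prec ->
  (forall g, graverp L g -> B g) -> is_groebner prec n L B.
Proof.
move=> to hB u nu su m fm hm.
have [_ _ _ _ wf] := to.
have supF : forall v, fiber L u v -> supported_in n v.
  move=> v [_ h] i j hi; have := latS h j hi; rewrite /vsub su //; lia.
suff H : forall x, fiber L u x -> dreach (fiber L u) B prec x m.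
  apply: H; split => //; have -> : vsub u u = (@vzero c) by apply: vext => i j; rewrite /vsub /vzero; lia.
  exact: lat0.
elim/(well_founded_ind wf) => x IH fx.
case: (classic (x = m)) => [->|ne]; first exact: dreach_refl.
have pmx : prec m x by apply: hm => //.
have Ld : L (vsub x m).
  have -> : vsub x m = vsub (vsub u m) (vsub u x) by apply: vext => i j; rewrite /vsub; lia.
  apply: latB; [exact: fm.2 | exact: fx.2].
have [g [gg cg pg]] := groeb_step to (ltnSn _) fx.1 fm.1 (supF _ fx) (supF _ fm) Ld pmx.
have Lg : L g by case: gg.
have fx' : fiber L u (vsub x g).
  split.
    move=> i j; have := fx.1 i j; have := fm.1 i j; move/conf_leE: cg => /(_ i j).
    rewrite /cint /vsub; lia.
  have -> : vsub u (vsub x g) = vsub (vsub u x) (vsub (@vzero c) g) by apply: vext => i j; rewrite /vsub /vzero; lia.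
  apply: latB; [exact: fx.2 | exact: latN].
have rel : [/\ tdom (vsub x g), tdom x & prec (vsub x g) x].
  split; [exact: tdom_supp fx'.1 (supF _ fx') | exact: tdom_supp fx.1 (supF _ fx) | exact: pg].
have pb : pmB B (vsub x (vsub x g)).
  left; have -> : vsub x (vsub x g) = g by apply: vext => i j; rewrite /vsub; lia.
  exact: hB.
exact: (dreach_pre (IH _ rel fx') fx' pb pg).
Qed.

End Lat.

Section Main.
Variable c : nat.
Local Open Scope ring_scope.
Variable L : nat -> vec c -> Prop.
Hypothesis hL : sym_chain L.

Lemma Llat n : (0 < n)%N -> is_lattice n (L n).
Proof. by case: hL => h _ n0; case: (h n n0). Qed.
Lemma Lsym n : (0 < n)%N -> sym_invariant n (L n).
Proof. by case: hL => h _ n0; case: (h n n0). Qed.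
Lemma Lmon m n u : (0 < m)%N -> (m <= n)%N -> L m u -> L n u.
Proof. by case: hL => _ h m0 mn; apply: h. Qed.

Lemma L_bperm n f g u : (0 < n)%N -> bperm n f g -> L n u -> L n (vcomp u f).
Proof. move=> n0 bp Lu; have [s hs] := exists_sact c bp; rewrite -hs; exact: Lsym. Qed.

Definition Lu (v : vec c) := exists N, (0 < N)%N /\ L N v.

Lemma Lu_bperm K f g v : bperm K f g -> Lu v -> Lu (vcomp v f).
Proof.
move=> bp [N [N0 LN]]; exists (maxn N K).
have M0 : (0 < maxn N K)%N by rewrite leq_max N0.
split => //; apply: L_bperm M0 (bperm_mon bp (leq_maxr _ _)) (Lmon N0 (leq_maxl _ _) LN).
Qed.

Lemma Lu_lat n : (0 < n)%N -> is_lattice n (fun v => Lu v /\ supported_in n v).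
Proof.
move=> n0; split.
- split; first by exists n; split => //; exact: lat0 (Llat n0).
  by move=> i j _.
- move=> u v [[N1 [h1 L1]] s1] [[N2 [h2 L2]] s2]; split.
    have M0 : (0 < maxn N1 N2)%N by rewrite leq_max h1.
    exists (maxn N1 N2); split => //.
    apply: (latB (Llat M0)); [exact: Lmon h1 (leq_maxl _ _) L1 | exact: Lmon h2 (leq_maxr _ _) L2].
  by move=> i j hi; rewrite /vsub s1 // s2.
- by move=> u [].
Qed.

Lemma vcompK f g (v : vec c) : (forall i, f (g i) = i) -> vcomp (vcomp v f) g = v.
Proof. by move=> h; apply: vext => i j; rewrite /vcomp h. Qed.

Lemma Gr_bperm K f g v : bperm K f g -> graverp Lu v -> graverp Lu (vcomp v f).
Proof.
move=> bp [Lv vz hmin]; have [h1 h2 h3 h4] := bp.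
split.
- exact: Lu_bperm bp Lv.
- move=> e; apply: vz; rewrite -(vcompK v h1) e; exact: vext.
- move=> w Lw wz cw.
  have cw' : conf_le (vcomp w g) v.
    apply/conf_leE => i j; move/conf_leE: cw => /(_ (g i) j); by rewrite /vcomp h1.
  have wz' : vcomp w g <> @vzero c.
    move=> e; apply: wz; rewrite -(vcompK w h2) e; exact: vext.
  have := hmin _ (Lu_bperm (bperm_sym bp) Lw) wz' cw'.
  by move=> <-; rewrite vcompK.
Qed.

Definition PI N v := exists K f g, bperm K f g /\ L N (vcomp v f).

Lemma claimC : exists N, (0 < N)%N /\ forall v, graverp Lu v -> PI N v.
Proof.
apply: NNPP => H.
have H' : forall N, exists v, (0 < N)%N -> graverp Lu v /\ ~ PI N v.
  move=> N; case: (ltnP 0 N) => N0; last by exists (@vzero c) => h; exfalso; lia.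
  apply: NNPP => H1; apply: H; exists N; split => // v gv; apply: NNPP => np; apply: H1.
  by exists v.
have [bad hbad] := fchoice H'.
have H2 : forall v, exists M, Lu v -> (0 < M)%N /\ L M v.
  move=> v; case: (classic (Lu v)) => [[M hM]|nl]; first by exists M.
  by exists 0%N.
have [lvl hlvl] := fchoice H2.
pose Nseq := fix Nseq (k : nat) : nat :=
  match k with 0 => 1%N | k'.+1 => maxn (Nseq k') (lvl (bad (Nseq k'))) end.
have N0 : forall k, (0 < Nseq k)%N by elim=> //= k IH; rewrite leq_max IH.
have Nmon : forall k l, (k <= l)%N -> (Nseq k <= Nseq l)%N.
  move=> k l; elim: l => [|l IH]; first by rewrite leqn0 => /eqP ->.
  rewrite leq_eqVlt => /orP [/eqP -> //|]; rewrite ltnS => /IH h.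
  by apply: leq_trans h _; rewrite /= leq_maxl.
pose v k := bad (Nseq k).
have gk : forall k, graverp Lu (v k) /\ ~ PI (Nseq k) (v k) by move=> k; apply: hbad.
have fs : forall k, finsupp (v k).
  move=> k; have [[M [M0 LM]] _ _] := (gk k).1; exists M => i j hi; exact: (latS (Llat M0) LM j hi).
have [k [l [lt [K [f [g [bp cf]]]]]]] := vec_wqo fs.
have gl : graverp Lu (vcomp (v l) g) := Gr_bperm (bperm_sym bp) (gk l).1.
have [Lvk vkz _] := (gk k).1.
have e : v k = vcomp (v l) g by case: gl => _ _ h; apply: h.
have [l0 Ll] := hlvl _ Lvk.
have Lk : L (Nseq l) (v k).
  apply: Lmon l0 _ Ll; apply: leq_trans (Nmon k.+1 l lt); by rewrite /= leq_maxr.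
apply: (gk l).2; exists K, g, f; split; [exact: bperm_sym | by rewrite -e].
Qed.

Variable N : nat.
Hypothesis N0 : (0 < N)%N.
Hypothesis HN : forall v, graverp Lu v -> PI N v.

Lemma GinL n v : (N <= n)%N -> graverp Lu v -> supported_in n v -> L n v.
Proof.
move=> Nn gv sv.
have n0 : (0 < n)%N by apply: leq_trans N0 Nn.
have [K [f [g [bp Lh]]]] := HN gv.
have sh : supported_in n (vcomp v f).
  move=> i j hi; apply: (latS (Llat N0) Lh); exact: leq_trans Nn hi.
have ev : v = vcomp (vcomp v f) g by rewrite vcompK //; case: bp.
have [tau [taui [bt et]]] := perm_restrict (bperm_sym bp) sv sh ev.
rewrite et; apply: L_bperm n0 bt _; exact: Lmon N0 Nn Lh.
Qed.

Lemma Sat n v : (N <= n)%N -> Lu v -> supported_in n v -> L n v.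
Proof.
move=> Nn Lv sv.
have n0 : (0 < n)%N by apply: leq_trans N0 Nn.
apply: (graver_span (Lu_lat n0) (L' := L n)) => //.
- exact: lat0 (Llat n0).
- move=> u w hu hw; exact: (latB (Llat n0) hu hw).
- move=> g [[Lg sg] gz hmin]; apply: GinL => //; split => // w Lw wz cw.
  apply: hmin => //; split => //; exact: conf_supp cw sg.
Qed.

Definition Bset (b : vec c) := graverp Lu b /\ supported_in N b.

Lemma B_L n b : (N <= n)%N -> Bset b -> L n b.
Proof. move=> Nn [gb sb]; apply: GinL => //; move=> i j hi; apply: sb; exact: leq_trans Nn hi. Qed.

Lemma graver_orbit n v : (N <= n)%N -> graverp (L n) v <-> sym_orbit n Bset v.
Proof.
move=> Nn; have n0 : (0 < n)%N by apply: leq_trans N0 Nn.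
split.
- move=> [Lv vz hmin].
  have sv := latS (Llat n0) Lv.
  have gv : graverp Lu v.
    split => //; first by exists n.
    move=> w Lw wz cw; apply: hmin => //; apply: Sat => //; exact: conf_supp cw sv.
  have [K [f [g [bp Lh]]]] := HN gv.
  have sb : supported_in N (vcomp v f) := latS (Llat N0) Lh.
  have sh : supported_in n (vcomp v f) by move=> i j hi; apply: sb; exact: leq_trans Nn hi.
  have ev : v = vcomp (vcomp v f) g by rewrite vcompK //; case: bp.
  have [tau [taui [bt et]]] := perm_restrict (bperm_sym bp) sv sh ev.
  have [s hs] := exists_sact c bt.
  exists s, (vcomp v f); split; last by rewrite hs.
  split => //; exact: Gr_bperm bp gv.
- move=> [s [b [[gb sb] ->]]].
  have bp := bperm_pext s.
  rewrite sact_vcomp.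
  have gv := Gr_bperm bp gb.
  have sv : supported_in n (vcomp b (pext s^-1)).
    move=> i j hi; rewrite /vcomp pext_ge //; apply: sb; exact: leq_trans Nn hi.
  case: gv => Lv vz hmin.
  split => //; first by apply: GinL => //; split.
  move=> w Lw wz cw; apply: hmin => //; by exists n.
Qed.

End Main.

Theorem corollary4p4 (c : nat) (hc : (0 < c)%N) (L : nat -> vec c -> Prop)
  (hL : sym_chain L) :
  [/\ X_stabilizes (@is_graver c) L,
      X_stabilizes (@is_ugb c) L,
      (forall prec, is_term_order prec -> X_stabilizes (is_groebner prec) L),
      X_stabilizes (@is_markov c) L &
      chain_stabilizes L].
Proof.
have [N [N0 HN]] := claimC hL.
have n0 : forall n, (N <= n)%N -> (0 < n)%N by move=> n Nn; apply: leq_trans N0 Nn.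
have BL : forall n, (N <= n)%N -> forall b, Bset L N b -> L n b.
  by move=> n Nn b hb; exact: (B_L hL N0 HN Nn hb).
have GOi : forall n g, (N <= n)%N -> graverp (L n) g <-> sym_orbit n (Bset L N) g.
  by move=> n g Nn; exact: (graver_orbit hL N0 HN (n:=n) g Nn).
have GO : forall n, (N <= n)%N -> forall g, graverp (L n) g -> sym_orbit n (Bset L N) g.
  by move=> n Nn g hg; apply/(GOi n g Nn).
split.
- exists N; split => //; exists (Bset L N) => n Nn; split; first exact: BL.
  move=> v; split => h; [exact/(GOi n v Nn) | exact/(GOi n v Nn)].
- exists N; split => //; exists (Bset L N) => n Nn; split; first exact: BL.
  move=> prec to; exact: (groebner_of (Llat hL (n0 n Nn)) to (GO n Nn)).
- move=> prec to; exists N; split => //; exists (Bset L N) => n Nn; split; first exact: BL.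
  exact: (groebner_of (Llat hL (n0 n Nn)) to (GO n Nn)).
- exists N; split => //; exists (Bset L N) => n Nn; split; first exact: BL.
  exact: (markov_of (Llat hL (n0 n Nn)) (GO n Nn)).
- exists N; split => // m n Nm mn v.
  have Nn : (N <= n)%N by apply: leq_trans Nm mn.
  have m0 := n0 m Nm.
  split.
  + move=> Lv; apply: (graver_span (Llat hL (n0 n Nn)) (L' := zspan (sym_orbit n (L m)))) => //.
    * exact: zspan0.
    * move=> u w; exact: zspan_sub.
    * move=> g /(GO n Nn) [s [b [hb ->]]]; apply: zspan_gen; exists s, b; split => //.
      exact: BL.
  + elim=> [|u [s [b [Lb ->]]]|u w _ h1 _ h2].
    * exact: lat0 (Llat hL (n0 n Nn)).
    * apply: (Lsym hL (n0 n Nn)); exact: (Lmon hL m0 mn Lb).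
    * exact: (latB (Llat hL (n0 n Nn)) h1 h2).
Qed.
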